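(* Let $G$ be a finite group. For all subsets $X,Y\subseteq G$ with $X^G=X$ and $Y^G=Y$ we have $[X,{}_MY]=[[X,G],{}_MY]$.
   Context: $[x,y]=x^{-1}y^{-1}xy$, $x^y=y^{-1}xy$, $X^G=\{x^g:x\in X,g\in G\}$. For subsets $A,B\subseteq G$, $[A,B]$ is the subgroup generated by $\{[a,b]:a\in A,b\in B\}$, and $[A,{}_kB]=[\cdots[[A,B],B]\cdots,B]$ with $k$ copies of $B$. $M=M(G)\in\mathbb{N}$ is fixed such that $[A,{}_MB]=[A,{}_iB]$ for all $i\ge M$ and all $A,B\subseteq G$ with $A^G=A$, $B^G=B$. *)

(* Defs.v *)
From mathcomp Require Import all_boot all_fingroup.
Set Implicit Arguments. Unset Strict Implicit. Unset Printing Implicit Defensive.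
Local Open Scope group_scope.

(* [A, _k B] : iterated commutator subgroup [...[[A,B],B]...,B] with k copies
   of B; [A, _0 B] = A.  [~: C, B] is the subgroup generated by all [c,b]. *)
Definition itcomm (gT : finGroupType) (A B : {set gT}) (k : nat) : {set gT} :=
  iter k (fun C => [~: C, B]) A.

Definition normal_subset (gT : finGroupType) (G : {group gT}) (A : {set gT}) :=
  (A \subset G) && (class_support A G == A).

Definition stab_index (gT : finGroupType) (G : {group gT}) (M : nat) : Prop :=
  forall A B : {set gT}, normal_subset G A -> normal_subset G B ->
    forall i, M <= i -> itcomm A B M = itcomm A B i.

(* Main.v *)
Require Import Defs.
From mathcomp Require Import all_boot all_fingroup all_solvable.
Local Open Scope group_scope.

Lemma itcomm_mono (gT : finGroupType) (A A' B : {set gT}) k :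
  A \subset A' -> itcomm A B k \subset itcomm A' B k.
Proof.
move=> sA; elim: k => [|k IH] //=; exact: commSg.
Qed.

Lemma itcommS (gT : finGroupType) (A B : {set gT}) k :
  itcomm A B k.+1 = itcomm [~: A, B] B k.
Proof. by rewrite /itcomm iterSr. Qed.

Lemma ns_conj (gT : finGroupType) (G : {group gT}) (X : {set gT}) g :
  normal_subset G X -> g \in G -> X :^ g = X.
Proof.
case/andP=> _ /eqP hX Gg; rewrite -{1 2}hX; exact: class_supportGidr.
Qed.

Arguments ns_conj {gT G X g}.
Arguments itcomm_mono {gT A A' B k}.

Lemma key (gT : finGroupType) (G : {group gT}) (X Y : {set gT}) :
  normal_subset G X -> normal_subset G Y ->
  [~: [~: X, G], Y] \subset [~: X, Y].
Proof.
move=> hX hY.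
have sXG : X \subset G by case/andP: hX.
have sYG : Y \subset G by case/andP: hY.
have nH : G \subset 'N([~: X, Y]).
  apply/subsetP=> g Gg; apply/normP.
  by rewrite conjsRg (ns_conj hX Gg) (ns_conj hY Gg).
have s1 : [~: X, G] \subset <<X>>.
  rewrite gen_subG; apply/subsetP=> _ /imset2P[x g Xx Gg ->].
  rewrite /commg groupM ?groupV ?mem_gen //.
  by rewrite -(ns_conj hX Gg) memJ_conjg.
apply: subset_trans (commSg _ s1) _.
have nX : <<X>> \subset 'N([~: X, Y]) by rewrite gen_subG (subset_trans sXG).
have nY : Y \subset 'N([~: X, Y]) by exact: subset_trans sYG nH.
rewrite -quotient_cents2 // quotient_gen ?(subset_trans sXG) //.
rewrite gen_subG quotient_cents2 ?(subset_trans sXG) //.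
Qed.

Arguments key {gT G X Y}.

Theorem lemma2p2 (gT : finGroupType) (G : {group gT}) (M : nat)
  (hM : stab_index G M) (X Y : {set gT}) :
  normal_subset G X -> normal_subset G Y ->
  itcomm X Y M = itcomm [~: X, G] Y M.
Proof.
move=> hX hY.
have hG : normal_subset G G by rewrite /normal_subset subxx class_support_id eqxx.
case: M hM => [hM|n hM].
  exact: (hM X G hX hG 1%N isT).
apply/eqP; rewrite eqEsubset; apply/andP; split.
  rewrite (hM X Y hX hY n.+2 (leqnSn _)) itcommS.
  apply: itcomm_mono; apply: commgS; by case/andP: hY.
rewrite itcommS [itcomm X Y _]itcommS.
exact: itcomm_mono (key hX hY).
Qed.
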